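(* Let $f:\mathbb N\to\mathbb R$ be defined by $f(0)=0$ and $f(n)=f(n-1)+1+\frac1n\sum_{i=0}^{n-1}f(i)$ for $n>0$. Then for every $n\ge 0$, $$f(n)=\sum_{k=1}^{n}\frac{1}{k!}\binom{n}{k}.$$ *)

(* Defs.v *)
From mathcomp Require Import all_boot all_order all_algebra.
From mathcomp Require Import reals.
Set Implicit Arguments. Unset Strict Implicit. Unset Printing Implicit Defensive.

(* Main.v *)
Require Import Defs.
From mathcomp Require Import all_boot all_order all_algebra.
From mathcomp Require Import reals.
From mathcomp Require Import ring.
Import Order.TTheory GRing.Theory Num.Theory.
Local Open Scope ring_scope.

Section Aux.
Variable R : realType.

Definition G (n N : nat) : R :=
  \sum_(k < N) ('C(n, k.+1))%:R / ((k.+1)`!)%:R.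

Lemma Gext n N : (n <= N)%N -> G n N = G n n.
Proof.
elim: N => [|N IH]; first by rewrite leqn0 => /eqP ->.
rewrite leq_eqVlt => /orP [/eqP -> //|]; rewrite ltnS => hN.
by rewrite /G big_ord_recr /= bin_small ?ltnS // mul0r addr0 -/(G n N) IH.
Qed.

Lemma rhsG n : \sum_(1 <= k < n.+1) (k`!)%:R^-1 * ('C(n, k))%:R = G n n :> R.
Proof.
rewrite big_add1 /= big_mkord /G; apply: eq_bigr => k _; by rewrite mulrC.
Qed.

Lemma sum_bin n k : (\sum_(0 <= i < n) 'C(i, k) = 'C(n, k.+1))%N.
Proof.
elim: n => [|n IH]; first by rewrite big_geq.
by rewrite big_nat_recr //= IH binS.
Qed.
End Aux.

Theorem mainTheorem4 (R : realType) (f : nat -> R)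
  (f0 : f 0%N = 0)
  (fS : forall n : nat, (0 < n)%N ->
     f n = f n.-1 + 1 + n%:R^-1 * \sum_(0 <= i < n) f i) :
  forall n : nat,
    f n = \sum_(1 <= k < n.+1) (k`!)%:R^-1 * ('C(n, k))%:R.
Proof.
elim/ltn_ind => -[|m] IH.
  by rewrite f0 big_geq.
rewrite fS //= IH // !rhsG.
have -> : \sum_(0 <= i < m.+1) f i = \sum_(0 <= i < m.+1) G R i m.+1.
  rewrite !big_mkord; apply: eq_bigr => i _.
  by rewrite IH ?ltnS ?leq_ord // rhsG Gext // ltnW.
rewrite -(@Gext R m m.+1) //.
have hn : (m.+1)%:R != 0 :> R by rewrite pnatr_eq0.
apply: (mulfI hn); rewrite !mulrDr mulrA mulfV // mul1r mulr1.
rewrite big_mkord exchange_big /=.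
have -> : \sum_(j < m.+1) \sum_(i < m.+1) ('C(i, j.+1))%:R / ((j.+1)`!)%:R
          = \sum_(j < m.+1) ('C(m.+1, j.+2))%:R / ((j.+1)`!)%:R :> R.
  apply: eq_bigr => j _; rewrite -mulr_suml -natr_sum.
  by rewrite -(big_mkord xpredT (fun i => 'C(i, j.+1))) sum_bin.
rewrite /G !mulr_sumr.
have E1 : \sum_(i < m.+1) (m.+1)%:R * (('C(m.+1, i.+1))%:R / ((i.+1)`!)%:R)
  = \sum_(i < m.+1) (m.+1)%:R * (('C(m, i.+1))%:R / ((i.+1)`!)%:R)
    + \sum_(i < m.+1) ('C(m.+1, i.+1))%:R / (i`!)%:R :> R.
  rewrite -big_split /=; apply: eq_bigr => i _.
  rewrite [in LHS]binS natrD mulrDl mulrDr; congr (_ + _).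
  have H : (m.+1 * 'C(m, i) = i.+1 * 'C(m.+1, i.+1))%N by exact: mul_bin_diag.
  have H' := congr1 (fun x => x%:R : R) H; rewrite /= !natrM in H'.
  rewrite mulrA H' factS natrM binS natrD; field.
  by rewrite pnatr_eq0 -lt0n fact_gt0 addrC natr1 pnatr_eq0.
rewrite E1 -addrA; congr (_ + _).
rewrite [RHS]big_ord_recl /= bin1 divr1; congr (_ + _).
rewrite big_ord_recr /= bin_small // mul0r addr0.
by apply: eq_bigr.
Qed.
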